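(* Let $G$ be a $K_4$-minor-free graph, $xx'$ an edge of $G$, and $y,z$ distinct vertices of $G$ not in $\{x,x'\}$. Then at least one of the sets $\{x,y,z\}$ and $\{x',y,z\}$ is feasible.
   Context: $K_4$-minor-free graphs are $3$-colorable. For $n\in\mathbb{N}$, the chain of diamonds $D_n$ is the graph with vertex set $\{u_i,v_i,w_i:i\in[n]\}\cup\{u_0\}$ and edge set $\{u_{i-1}v_i,u_{i-1}w_i,v_iw_i,v_iu_i,w_iu_i: i\in[n]\}$; let $U(D_n)=\{u_0,\dots,u_n\}$. A set $X$ of distinct vertices of $G$ is connected by a chain of diamonds if there exist $n\in\mathbb{N}$ and a graph homomorphism $\varphi:D_n\to G$ with $X\subseteq\varphi(U(D_n))$. A set $X$ of three distinct vertices of $G$ is feasible if $X$ is not connected by a chain of diamonds and there is a proper $3$-coloring $\phi$ of $G$ with $|\phi(X)|\le 2$. *)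

(* Defs.v *)
From mathcomp Require Import all_boot.
Set Implicit Arguments. Unset Strict Implicit. Unset Printing Implicit Defensive.

Section Graphs.
Variable T : finType.
Variable e : rel T.

Definition simple_graph : Prop := symmetric e /\ irreflexive e.

Definition connected_set (B : {set T}) : Prop :=
  forall x y, x \in B -> y \in B ->
    connect (fun u v => [&& u \in B, v \in B & e u v]) x y.

Definition has_K4_minor : Prop :=
  exists B : 'I_4 -> {set T},
    (forall i, B i != set0) /\
    (forall i, connected_set (B i)) /\
    (forall i j, i != j -> [disjoint B i & B j]) /\
    (forall i j, i != j -> exists x y, [/\ x \in B i, y \in B j & e x y]).

Definition K4_minor_free : Prop := ~ has_K4_minor.

(* A homomorphism from the chain of diamonds D_n into G, given by the images
   u i (0 <= i <= n) of u_i, and v i, w i (1 <= i <= n) of v_i, w_i. *)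
Definition diamond_chain_hom (n : nat) (u v w : nat -> T) : Prop :=
  forall i, 1 <= i <= n ->
    [/\ e (u i.-1) (v i), e (u i.-1) (w i), e (v i) (w i),
        e (v i) (u i) & e (w i) (u i)].

Definition connected_by_chain_of_diamonds (X : {set T}) : Prop :=
  exists n (u v w : nat -> T), diamond_chain_hom n u v w /\
    (forall x, x \in X -> exists2 i, i <= n & u i = x).

Definition proper_coloring (k : nat) (c : T -> 'I_k) : Prop :=
  forall x y, e x y -> c x != c y.

Definition feasible (X : {set T}) : Prop :=
  [/\ #|X| = 3,
      ~ connected_by_chain_of_diamonds X &
      exists c : T -> 'I_3, proper_coloring c /\ #|c @: X| <= 2].

End Graphs.

(* Main.v *)
Require Import Defs.
From mathcomp Require Import all_boot.
From mathcomp Require Import zify.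
From Stdlib Require Import Classical.
Set Implicit Arguments. Unset Strict Implicit. Unset Printing Implicit Defensive.

Section Aux.
Variable T : finType.
Implicit Types (e : rel T).

Definition res e (B : {set T}) : rel T := fun u w => [&& u \in B, w \in B & e u w].

Lemma res_sym e B : symmetric e -> symmetric (res e B).
Proof. by move=> se u w; rewrite /res andbCA se. Qed.

Lemma adj_sym e (A B : {set T}) : symmetric e ->
  (exists x y, [/\ x \in A, y \in B & e x y]) ->
  (exists x y, [/\ x \in B, y \in A & e x y]).
Proof. by move=> se [x [y [xa yb exy]]]; exists y, x; rewrite se. Qed.

Lemma K4_of e (A B C D : {set T}) : symmetric e ->
  A != set0 -> B != set0 -> C != set0 -> D != set0 ->
  connected_set e A -> connected_set e B -> connected_set e C -> connected_set e D ->
  [disjoint A & B] -> [disjoint A & C] -> [disjoint A & D] ->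
  [disjoint B & C] -> [disjoint B & D] -> [disjoint C & D] ->
  (exists x y, [/\ x \in A, y \in B & e x y]) ->
  (exists x y, [/\ x \in A, y \in C & e x y]) ->
  (exists x y, [/\ x \in A, y \in D & e x y]) ->
  (exists x y, [/\ x \in B, y \in C & e x y]) ->
  (exists x y, [/\ x \in B, y \in D & e x y]) ->
  (exists x y, [/\ x \in C, y \in D & e x y]) ->
  has_K4_minor e.
Proof.
move=> se nA nB nC nD cA cB cC cD dAB dAC dAD dBC dBD dCD eAB eAC eAD eBC eBD eCD.
exists (fun i : 'I_4 => nth set0 [:: A; B; C; D] i).
split; first by case=> [[|[|[|[|i]]]] Hi].
split; first by case=> [[|[|[|[|i]]]] Hi].
split.
  case=> [[|[|[|[|i]]]] Hi] // [[|[|[|[|j]]]] Hj] //= Hij;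
  rewrite ?(disjoint_sym B A) ?(disjoint_sym C A) ?(disjoint_sym D A)
    ?(disjoint_sym C B) ?(disjoint_sym D B) ?(disjoint_sym D C) //;
  by move: Hij; rewrite /eq_op /= eqxx.
case=> [[|[|[|[|i]]]] Hi] // [[|[|[|[|j]]]] Hj] //= Hij;
  try (by apply: adj_sym); try done; by move: Hij; rewrite /eq_op /= eqxx.
Qed.

Lemma path_conn e a s : symmetric e -> path e a s ->
  connected_set e [set z | z \in a :: s].
Proof.
move=> se pa; set B := [set z | z \in a :: s].
have sub : {subset a :: s <= B} by move=> z zi; rewrite inE.
have key : forall t b, path e b t -> {subset b :: t <= B} ->
    forall z, z \in b :: t -> connect (res e B) b z.
  elim=> [|c t IH] b /=.
    by move=> _ _ z; rewrite inE => /eqP ->.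
  move=> /andP[ebc pct] sb z; rewrite inE => /orP[/eqP -> //|zin].
  apply: connect_trans (IH c pct _ z zin).
    apply: connect1; rewrite /res !sb ?ebc // !inE eqxx ?orbT //.
  by move=> u ui; apply: sb; rewrite inE ui orbT.
move=> x y; rewrite !inE => xi yi.
apply: connect_trans (key s a pa sub y yi).
by rewrite (sym_connect_sym (res_sym B se)) (key s a pa sub x xi).
Qed.

Lemma uniq_size_le (s : seq T) : uniq s -> size s <= #|T|.
Proof. by move/card_uniqP <-; apply: max_card. Qed.

Lemma wheel_core e x v0 p : symmetric e -> irreflexive e ->
  e x v0 -> all (fun z => e x z) p -> uniq (v0 :: p) -> path e v0 p ->
  (forall w, e x w -> e v0 w -> w \in v0 :: p) ->
  1 < #|[set w | e x w & e v0 w]| -> has_K4_minor e.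
Proof.
move=> se ie v0S pS up pp ext H.
have [w1 [w2 [w1i w2i w12]]] := card_gt1P H.
move: w1i w2i; rewrite !inE => /andP[ew1 e0w1] /andP[ew2 e0w2].
have inp : forall w, e x w -> e v0 w -> w \in p.
  move=> w ew e0w; move: (ext w ew e0w); rewrite inE => /orP[/eqP wv|//].
  by rewrite wv ie in e0w.
case: p pS up pp ext inp => [|v1 p'] pS up pp ext inp;
  first by have := inp _ ew1 e0w1.
have [w [ew e0w wp']] : exists w, [/\ e x w, e v0 w & w \in p'].
  move: (inp _ ew1 e0w1) (inp _ ew2 e0w2); rewrite !inE.
  move=> h1 h2; case: (eqVneq w1 v1) h1 => [E|ne1] /= h1; last by exists w1.
  move: h2 => /orP[/eqP E2|h2]; first by rewrite E E2 eqxx in w12.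
  by exists w2.
case/splitPr: wp' pS up pp => p1 p2 pS up pp.
have [xv1 xp1] : e x v1 /\ all (fun z => e x z) p1.
  by move: pS; rewrite /= all_cat => /andP[-> /andP[-> _]].
move: up; rewrite cons_uniq => /andP[v0n up].
have v0C : v0 \notin v1 :: p1.
  by apply: contra v0n; rewrite !inE mem_cat => /orP[->|->]; rewrite ?orbT.
have v0w : v0 != w.
  by apply: contra v0n => /eqP ->; rewrite !inE mem_cat inE eqxx !orbT.
have wC : w \notin v1 :: p1.
  move: up; rewrite cons_uniq cat_uniq => /andP[v1n /and3P[_ hn _]].
  rewrite inE negb_or; apply/andP; split.
    by apply: contra v1n => /eqP <-; rewrite mem_cat inE eqxx orbT.
  by apply: contra hn => wp1; rewrite /= wp1.
move: pp => /= /andP[e01]; rewrite cat_path => /andP[pp1] /= /andP[elw _].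
have xC : x \notin v1 :: p1.
  rewrite inE negb_or; apply/andP; split.
    by apply/negP => /eqP E; rewrite -E ie in xv1.
  by apply/negP => xin; move/allP: xp1 => /(_ x xin); rewrite ie.
have conn1 : forall a : T, connected_set e [set a].
  by move=> a u z; rewrite !inE => /eqP -> /eqP ->; apply: connect0.
have ne1 : forall a : T, [set a] != set0.
  by move=> a; apply/set0Pn; exists a; rewrite inE.
apply: (@K4_of e [set x] [set v0] [set z | z \in v1 :: p1] [set w] se) => //.
- by apply/set0Pn; exists v1; rewrite inE mem_head.
- exact: path_conn.
- by rewrite disjoints1 inE; apply/negP => /eqP E; rewrite E ie in v0S.
- by rewrite disjoints1 inE ?xC ?v0C ?v0w.
- by rewrite disjoints1 inE; apply/negP => /eqP E; rewrite E ie in ew.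
- by rewrite disjoints1 inE ?xC ?v0C ?v0w.
- by rewrite disjoints1 inE ?xC ?v0C ?v0w.
- by rewrite disjoint_sym disjoints1 inE ?wC.
- by exists x, v0; rewrite !inE ?eqxx /=; split.
- by exists x, v1; rewrite !inE ?eqxx /=; split.
- by exists x, w; rewrite !inE ?eqxx /=; split.
- by exists v0, v1; rewrite !inE ?eqxx /=; split.
- by exists v0, w; rewrite !inE ?eqxx /=; split.
- by exists (last v1 p1), w; rewrite in_set mem_last in_set1 eqxx; split.
Qed.

Lemma wheel e x : symmetric e -> irreflexive e ->
  (exists y, e x y) ->
  (forall y, e x y -> 1 < #|[set w | e x w & e y w]|) -> has_K4_minor e.
Proof.
move=> se ie [y0 exy0] H.
suff main : forall k v0 p, #|T| - size p <= k -> e x v0 -> all (fun z => e x z) p ->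
    uniq (v0 :: p) -> path e v0 p -> has_K4_minor e.
  by apply: (main #|T| y0 [::]); rewrite ?exy0 ?subn0.
elim=> [|k IH] v0 p hk v0S pS up pp;
  (case: (boolP [exists w, [&& e x w, e v0 w & w \notin v0 :: p]]) =>
    [/existsP[w /and3P[ew e0w wn]] | /existsPn nw];
  [ | apply: (wheel_core se ie v0S pS up pp); last exact: H;
      by move=> w ew e0w; move: (nw w); rewrite ew e0w /= negbK]).
  have := uniq_size_le (s := w :: v0 :: p); rewrite cons_uniq wn up => /(_ isT) /= h.
  by exfalso; move: hk; rewrite leqn0 subn_eq0 => /(leq_trans h); lia.
apply: (IH w (v0 :: p)) => //=; first by move: hk; rewrite subnS; case: (_ - _).
  by rewrite v0S pS.
  by move: up; rewrite /= wn.
by rewrite se e0w.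
Qed.

Definition Q (pi : T -> T) (K : {set T}) e : rel T :=
  fun p q => (p != q) &&
    [exists a, exists b, [&& a \in K, b \in K, pi a == p, pi b == q & e a b]].

Definition fibconn (pi : T -> T) e := forall v a b, pi a = v -> pi b = v ->
  connect (fun u w => [&& pi u == v, pi w == v & e u w]) a b.

Lemma Q_simple pi K e : symmetric e -> simple_graph (Q pi K e).
Proof.
move=> se; split; last by move=> p; rewrite /Q eqxx.
move=> p q; rewrite /Q eq_sym; congr (_ && _).
apply/existsP/existsP => [[a /existsP[b /and5P[aK bK pa qb eab]]]|
                          [a /existsP[b /and5P[aK bK pa qb eab]]]];
  by exists b; apply/existsP; exists a; rewrite aK bK pa qb se.
Qed.

Lemma QE pi K e p q : Q pi K e p q ->
  exists a b, [/\ a \in K, b \in K, pi a = p, pi b = q & e a b].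
Proof.
by case/andP=> _ /existsP[a /existsP[b /and5P[aK bK /eqP pa /eqP qb eab]]];
  exists a, b.
Qed.

Lemma Q_lift pi K e : fibconn pi e -> has_K4_minor (Q pi K e) -> has_K4_minor e.
Proof.
move=> fc [B' [ne [cn [dj adj]]]].
pose B := fun i => [set a | pi a \in B' i].
have adjB : forall i j, i != j -> exists x y, [/\ x \in B i, y \in B j & e x y].
  move=> i j ij; have [p [q [pi' qj /QE[a [b [_ _ pa qb eab]]]]]] := adj i j ij.
  by exists a, b; rewrite !inE pa qb.
have fsub : forall i a, a \in B i -> forall b, pi b = pi a ->
    connect (res e (B i)) a b.
  move=> i a ai b pb.
  apply: connect_sub (fc (pi a) a b erefl pb) => u w /and3P[/eqP pu /eqP pw euw].
  have ai' : pi a \in B' i by rewrite inE in ai.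
  by apply: connect1; rewrite /res !inE pu pw ai' euw.
have key : forall i s p a b, pi a = p -> a \in B i ->
    path (res (Q pi K e) (B' i)) p s -> pi b = last p s ->
    connect (res e (B i)) a b.
  move=> i; elim=> [|q s IH] p a b pa ai /=.
    by move=> _ bp; apply: fsub; rewrite // bp pa.
  case/andP=> /and3P[pB qB /QE[a' [b' [_ _ pa' qb' eab']]]] ps lb.
  have a'i : a' \in B i by rewrite inE pa'.
  have b'i : b' \in B i by rewrite inE qb'.
  have ca : connect (res e (B i)) a a' by apply: fsub => //; rewrite pa pa'.
  apply: connect_trans ca _.
  apply: connect_trans (IH q b' b qb' b'i ps lb).
  by apply: connect1; rewrite /res a'i b'i eab'.
exists B; split.
  move=> i; have [j ij] : exists j : 'I_4, i != j.
    by case: (eqVneq i ord0) => [->|h]; [exists ord_max | exists ord0].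
  by have [a [_ [ai _ _]]] := adjB i j ij; apply/set0Pn; exists a.
split.
  move=> i a b ai bi.
  have ai' : pi a \in B' i by rewrite inE in ai.
  have bi' : pi b \in B' i by rewrite inE in bi.
  have /connectP[s ps lb] := cn i (pi a) (pi b) ai' bi'.
  exact: (key i s (pi a) a b erefl ai ps lb).
split; last exact: adjB.
move=> i j ij; rewrite -setI_eq0; apply/eqP/setP => a; rewrite !inE.
apply/negbTE/andP => [[ai aj]].
by move: (disjointFr (dj i j ij) ai); rewrite aj.
Qed.

Definition deg e v := #|[set w | e v w]|.
Definition nonisol e := [set v | 0 < deg e v].

Lemma nonisol_le e (S : {set T}) : (forall v w, e v w -> v \in S) ->
  #|nonisol e| <= #|S|.
Proof.
move=> H; apply: subset_leq_card; apply/subsetP => v; rewrite inE.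
by case/card_gt0P => w; rewrite inE => /H.
Qed.

Lemma nonisolP e v : reflect (exists w, e v w) (v \in nonisol e).
Proof.
rewrite inE /deg; apply: (iffP idP) => [/card_gt0P[w]|[w ew]].
  by rewrite inE; exists w.
by apply/card_gt0P; exists w; rewrite inE.
Qed.


Definition M e := \sum_v deg e v.

Lemma M0 e : (forall v w, ~~ e v w) -> M e = 0.
Proof.
move=> H; apply: big1 => v _; apply/eqP; rewrite cards_eq0; apply/eqP/setP => w.
by rewrite !inE (negbTE (H v w)).
Qed.

Lemma fibconn_rep pi e : symmetric e ->
  (forall a, connect (fun u w => [&& pi u == pi a, pi w == pi a & e u w]) a (pi a)) ->
  fibconn pi e.
Proof.
move=> se H v a b pa pb; have Ha := H a; have Hb := H b; rewrite pa in Ha.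
rewrite pb in Hb; apply: connect_trans Ha _.
rewrite (sym_connect_sym _); first exact: Hb.
by move=> u w; rewrite andbCA se.
Qed.

Lemma sum_mem (C : {set T}) : \sum_v (v \in C : nat) = #|C|.
Proof. by rewrite -sum1_card [RHS]big_mkcond /=; apply: eq_bigr => v _; case: (v \in C). Qed.

Lemma sum_eqk (x : T) k : \sum_v ((v == x) * k) = k.
Proof.
by rewrite (bigD1 x) //= eqxx mul1n big1 ?addn0 // => v /negbTE ->.
Qed.

Section Contract.
Variables (e : rel T) (x y : T).
Hypotheses (se : symmetric e) (ie : irreflexive e) (exy : e x y).
Let pi := fun a => if a == x then y else a.
Let e' := Q pi setT e.
Let C := [set w | e x w & e y w].

Lemma xy_neq : x != y.
Proof. by apply/negP => /eqP E; have := exy; rewrite E ie. Qed.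

Lemma pi_id a : a != x -> pi a = a.
Proof. by rewrite /pi => /negbTE ->. Qed.

Lemma pix : pi x = y.
Proof. by rewrite /pi eqxx. Qed.

Lemma piy : pi y = y.
Proof. by rewrite pi_id // eq_sym xy_neq. Qed.

Lemma ctr_fib : fibconn pi e.
Proof.
apply: fibconn_rep => // a; case: (eqVneq a x) => [->|ax].
  by rewrite pix; apply: connect1; rewrite pix piy !eqxx exy.
by rewrite pi_id //; apply: connect0.
Qed.

Lemma e'E a b : e a b -> pi a != pi b -> e' (pi a) (pi b).
Proof.
move=> eab nab; rewrite /e' /Q nab /=; apply/existsP; exists a; apply/existsP; exists b.
by rewrite !inE !eqxx eab.
Qed.

Lemma ctr_deg v : v != x -> v != y -> deg e v <= deg e' v + (v \in C).
Proof.
move=> vx vy; rewrite /deg.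
have e'v : forall w, e v w -> w != x -> e' v w.
  move=> w evw wx; have := e'E evw; rewrite !pi_id //; apply.
  by apply/negP => /eqP E; rewrite E ie in evw.
case: (boolP (e v x)) => evx.
  case: (boolP (e v y)) => evy.
    have vC : v \in C by rewrite inE -!(se v) evx evy.
    rewrite vC (cardsD1 x) inE evx add1n addn1 ltnS; apply: subset_leq_card.
    by apply/subsetP => w; rewrite !inE => /andP[wx evw]; apply: e'v.
  have -> : #|[set w | e v w]| = #|y |: ([set w | e v w] :\ x)|.
    by rewrite cardsU1 [in LHS](cardsD1 x) !inE evx (negbTE evy) andbF.
  apply: (leq_trans _ (leq_addr _ _)); apply: subset_leq_card.
  apply/subsetP => w; rewrite !inE => /orP[/eqP ->|/andP[wx evw]]; last exact: e'v.
  have := e'E evx; rewrite pix pi_id //; apply.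
  by [].
apply: (leq_trans _ (leq_addr _ _)); apply: subset_leq_card.
apply/subsetP => w; rewrite !inE => evw; apply: e'v => //.
by apply/negP => /eqP E; rewrite -E evw in evx.
Qed.

Lemma ctr_degxy : deg e x + deg e y <= deg e' y + #|C| + 2.
Proof.
rewrite /deg; set A := [set w | e x w] :|: [set w | e y w].
have sub : (A :\: [set x; y]) \subset [set w | e' y w].
  apply/subsetP => w; rewrite !inE negb_or => /andP[/andP[wx wy] /orP[exw|eyw]].
    by have := e'E exw; rewrite pix pi_id //; apply; rewrite eq_sym.
  by have := e'E eyw; rewrite piy pi_id //; apply; rewrite eq_sym.
have cA : #|A :\: [set x; y]| = #|A| - 2.
  rewrite cardsD; have -> : A :&: [set x; y] = [set x; y].
    by apply/setIidPr/subsetP => w; rewrite !inE => /orP[]/eqP->;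
      rewrite ?exy ?(se y x) ?exy ?orbT.
  by rewrite cards2 xy_neq.
have CI : [set w | e x w] :&: [set w | e y w] = C by apply/setP => w; rewrite !inE.
have := cardsUI [set w | e x w] [set w | e y w]; rewrite CI -/A => <-.
have := subset_leq_card sub; rewrite cA; lia.
Qed.

Lemma ctr_M : M e <= M e' + 2 * #|C| + 2.
Proof.
have pw : forall v, deg e v + (v == y) * deg e' y <= deg e' v + (v \in C)
                     + (v == x) * deg e x + (v == y) * deg e y.
  move=> v; case: (eqVneq v x) => [->|vx].
    by rewrite (negbTE xy_neq) mul1n mul0n; lia.
  case: (eqVneq v y) => [->|vy].
    by rewrite mul1n mul0n; lia.
  by rewrite mul0n mul0n !addn0; apply: ctr_deg.
have := leq_sum (index_enum T) (P := xpredT) (fun v _ => pw v).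
rewrite !big_split /= sum_mem !sum_eqk.
change (\sum_i deg e i) with (M e); change (\sum_i deg e' i) with (M e').
have := ctr_degxy; lia.
Qed.

Lemma ctr_nonisol : #|nonisol e'| < #|nonisol e|.
Proof.
have xn : x \in nonisol e by apply/nonisolP; exists y.
rewrite (cardsD1 x (nonisol e)) xn add1n ltnS; apply: nonisol_le => v w.
case/QE => a [b [_ _ pa _ eab]]; rewrite in_setD1; case: (eqVneq a x) => [ax|ax].
  rewrite -pa ax pix eq_sym xy_neq /=; apply/nonisolP; exists x; by rewrite se.
rewrite -pa pi_id // ax /=; apply/nonisolP; by exists b.
Qed.

Lemma ctr_N : 2 + #|C| <= #|nonisol e|.
Proof.
have xC : x \notin C by rewrite inE ie.
have yC : y \notin C by rewrite inE ie andbF.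
have : #|x |: (y |: C)| = 2 + #|C|.
  by rewrite !cardsU1 yC in_setU1 negb_or xy_neq (negbTE xC).
move <-; apply: subset_leq_card; apply/subsetP => w; rewrite !in_setU1.
case/orP=> [/eqP->|/orP[/eqP->|wC]]; apply/nonisolP.
- by exists y.
- by exists x; rewrite se.
- by move: wC; rewrite inE => /andP[exw _]; exists x; rewrite se.
Qed.

End Contract.


Lemma ctr_pack e x y : symmetric e -> irreflexive e -> e x y -> K4_minor_free e ->
  exists e', [/\ simple_graph e', K4_minor_free e', #|nonisol e'| < #|nonisol e|
    & M e <= M e' + 2 * #|[set w | e x w & e y w]| + 2].
Proof.
move=> se ie exy kf; exists (Q (fun a => if a == x then y else a) setT e); split.
- exact: Q_simple.
- by move=> h; apply: kf; apply: Q_lift (ctr_fib se ie exy) h.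
- exact: ctr_nonisol.
- exact: ctr_M.
Qed.

Lemma edge_bound n e : simple_graph e -> K4_minor_free e -> #|nonisol e| <= n ->
  M e = 0 \/ M e + 6 <= 4 * #|nonisol e|.
Proof.
elim: n e => [|n IH] e [se ie] kf hn.
all: case: (boolP [exists v, exists w, e v w]) => [/existsP[v /existsP[w evw]]|/existsPn nE];
  last by left; apply: M0 => a b; move: (nE a) => /existsPn.
  have : 0 < #|nonisol e| by apply/card_gt0P; exists v; apply/nonisolP; exists w.
  lia.
case: (boolP [exists x, exists y, e x y && (#|[set w | e x w & e y w]| <= 1)]) =>
  [/existsP[x /existsP[y /andP[exy c1]]]|/existsPn H]; last first.
  exfalso; apply: kf; apply: (wheel (x := v) se ie); first by exists w.
  by move=> y evy; move: (H v) => /existsPn/(_ y); rewrite evy /= -ltnNge.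
have hN := ctr_N se ie exy.
have [e' [s' kf' hI hM]] := ctr_pack se ie exy kf.
have hn' := leq_trans hI hn; rewrite ltnS in hn'.
have [h|h] := IH _ s' kf' hn'.
  by rewrite h in hM; right; lia.
by right; lia.
Qed.


Lemma K4_clique e a b c d : symmetric e -> irreflexive e ->
  e a b -> e a c -> e a d -> e b c -> e b d -> e c d -> has_K4_minor e.
Proof.
move=> se ie eab eac ead ebc ebd ecd.
have ne : forall p q, e p q -> p != q.
  by move=> p q epq; apply/negP => /eqP E; rewrite E ie in epq.
have conn1 : forall z : T, connected_set e [set z].
  by move=> z u w; rewrite !inE => /eqP -> /eqP ->; apply: connect0.
have ne1 : forall z : T, [set z] != set0.
  by move=> z; apply/set0Pn; exists z; rewrite inE.
apply: (@K4_of e [set a] [set b] [set c] [set d] se) => //;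
  try (by rewrite disjoints1 inE ne);
  first [ by exists a, b; rewrite !inE !eqxx; split
        | by exists a, c; rewrite !inE !eqxx; split
        | by exists a, d; rewrite !inE !eqxx; split
        | by exists b, c; rewrite !inE !eqxx; split
        | by exists b, d; rewrite !inE !eqxx; split
        | by exists c, d; rewrite !inE !eqxx; split ].
Qed.

Lemma avoid3 (A : {set 'I_3}) : #|A| <= 2 -> exists k, k \notin A.
Proof.
move=> h; have := cardsC A; rewrite card_ord => h2.
have : 0 < #|~: A| by lia.
by case/card_gt0P => k; rewrite inE => kn; exists k.
Qed.


Lemma col3 n e : simple_graph e -> K4_minor_free e -> #|nonisol e| <= n ->
  exists c : T -> 'I_3, proper_coloring e c.
Proof.
elim: n e => [|n IH] e [se ie] kf hn.
  exists (fun _ => ord0) => a b eab; exfalso.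
  have : 0 < #|nonisol e| by apply/card_gt0P; exists a; apply/nonisolP; exists b.
  lia.
have neq : forall p q, e p q -> p != q.
  by move=> p q epq; apply/negP => /eqP E; rewrite E ie in epq.
case: (boolP [exists v, (0 < deg e v) && (deg e v <= 2)]) =>
  [/existsP[v /andP[d0 d2]]|/existsPn nc1].
  pose e' := Q id (setT :\ v) e.
  have fc : fibconn id e by apply: fibconn_rep => // a; apply: connect0.
  have vn : v \in nonisol e by rewrite inE.
  have hn' : #|nonisol e'| <= n.
    rewrite (cardsD1 v) vn add1n ltnS in hn; apply: leq_trans hn.
    apply: nonisol_le => p q /QE[a [b [aK _ pa _ eab]]].
    move: aK; rewrite in_setD1 => /andP[av _]; rewrite in_setD1 -pa /= av /=.
    by apply/nonisolP; exists b.
  have [c' pc'] := IH e' (Q_simple _ _ se) (fun h => kf (Q_lift fc h)) hn'.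
  have [k kn] := avoid3 (leq_trans (leq_imset_card c' [set w | e v w]) d2).
  exists (fun a => if a == v then k else c' a) => a b eab.
  case: (eqVneq a v) => [av|av]; case: (eqVneq b v) => [bv|bv].
  - by rewrite av bv ie in eab.
  - by apply: contra kn => /eqP ->; apply: imset_f; rewrite inE -av.
  - by rewrite eq_sym; apply: contra kn => /eqP ->; apply: imset_f; rewrite inE -bv se.
  - apply: pc'; rewrite /e' /Q neq //=; apply/existsP; exists a; apply/existsP; exists b.
    by rewrite !in_setD1 !in_setT av bv /= !eqxx eab.
case: (boolP [exists u, exists b, exists c,
   [&& deg e u == 3, e u b, e u c, b != c & ~~ e b c]]) =>
  [/existsP[u /existsP[b /existsP[c /and5P[du3 eub euc bc nbc]]]]|/existsPn nc2].
  pose pi := fun a => if (a == b) || (a == u) then c else a.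
  have cu : c != u by rewrite eq_sym neq.
  have cb : c != b by rewrite eq_sym.
  have bu : b != u by rewrite eq_sym neq.
  have pic : pi c = c by rewrite /pi (negbTE cb) (negbTE cu).
  have pib : pi b = c by rewrite /pi eqxx.
  have piu : pi u = c by rewrite /pi eqxx orbT.
  have piE : forall z, z != u -> pi z = if z == b then c else z.
    by move=> z zu; rewrite /pi (negbTE zu) orbF.
  have fc : fibconn pi e.
    apply: fibconn_rep => // a; case: (eqVneq a b) => [->|ab].
      rewrite pib; apply: (connect_trans (y := u)); apply: connect1.
        by rewrite /= pib piu eqxx se eub.
      by rewrite /= piu pic eqxx euc.
    case: (eqVneq a u) => [->|au].
      by rewrite piu; apply: connect1; rewrite /= piu pic eqxx euc.
    by rewrite piE // (negbTE ab); apply: connect0.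
  pose e' := Q pi (setT :\ u) e.
  have un : u \in nonisol e by apply/nonisolP; exists b.
  have hn' : #|nonisol e'| <= n.
    rewrite (cardsD1 u) un add1n ltnS in hn; apply: leq_trans hn.
    apply: nonisol_le => p q /QE[a [a' [aK _ pa _ eaa]]].
    move: aK; rewrite in_setD1 => /andP[au _]; rewrite in_setD1 -pa piE //.
    case: (eqVneq a b) => [ab|ab] /=.
      by rewrite cu; apply/nonisolP; exists u; rewrite se.
    by rewrite au; apply/nonisolP; exists a'.
  have [c' pc'] := IH e' (Q_simple _ _ se) (fun h => kf (Q_lift fc h)) hn'.
  pose f := fun a => c' (pi a).
  have sub : f @: [set w | e u w] \subset f @: ([set w | e u w] :\ b).
    apply/subsetP => z /imsetP[w wN ->]; case: (eqVneq w b) => [->|wb].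
      have -> : f b = f c by rewrite /f pib pic.
      by apply: imset_f; rewrite !inE cb euc.
    by apply: imset_f; rewrite !inE wb; rewrite inE in wN.
  have c2 : #|[set w | e u w] :\ b| <= 2.
    move/eqP: du3; rewrite /deg (cardsD1 b) inE eub add1n => [[->]].
    by [].
  have [k kn] := avoid3 (leq_trans (subset_leq_card sub)
                          (leq_trans (leq_imset_card _ _) c2)).
  exists (fun a => if a == u then k else f a) => a a' eaa.
  case: (eqVneq a u) => [au|au]; case: (eqVneq a' u) => [au'|au'].
  - by rewrite au au' ie in eaa.
  - by apply: contra kn => /eqP ->; apply: imset_f; rewrite inE -au.
  - by rewrite eq_sym; apply: contra kn => /eqP ->; apply: imset_f; rewrite inE -au' se.
  - case: (eqVneq (pi a) (pi a')) => [E|NE].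
      exfalso; move: E; rewrite !piE //.
      case: (eqVneq a b) => [ab|ab]; case: (eqVneq a' b) => [ab'|ab'] E.
      + by rewrite ab ab' ie in eaa.
      + by move: eaa; rewrite ab -E (negbTE nbc).
      + by move: eaa; rewrite E ab' se (negbTE nbc).
      + by rewrite E ie in eaa.
    apply: pc'; rewrite /e' /Q NE /=; apply/existsP; exists a; apply/existsP; exists a'.
    by rewrite !in_setD1 !in_setT au au' /= !eqxx eaa.
case: (boolP [exists v, exists w, e v w]) => [/existsP[v0 /existsP[w0 e0]]|/existsPn nE];
  last first.
  exists (fun _ => ord0) => a b eab.
  by move: (nE a) => /existsPn/(_ b); rewrite eab.
exfalso.
have d3 : forall v, v \in nonisol e -> 3 <= deg e v.
  by move=> v; rewrite inE => d0; move: (nc1 v); rewrite d0 /= -ltnNge.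
case: (boolP [exists v, (v \in nonisol e) && (deg e v == 3)]) =>
  [/existsP[v /andP[vn /eqP dv]]|/existsPn nc3].
  have : 2 < #|[set w | e v w]| by move: dv; rewrite /deg => ->.
  case/card_gt2P => b1 [b2 [b3 [[h1 h2 h3] [n12 n23 n31]]]].
  rewrite !inE in h1 h2 h3.
  have adj : forall p q, e v p -> e v q -> p != q -> e p q.
    move=> p q evp evq pq; move: (nc2 v) => /existsPn/(_ p)/existsPn/(_ q).
    by rewrite dv eqxx evp evq pq /= negbK.
  apply: kf; apply: (K4_clique (a := v) (b := b1) (c := b2) (d := b3) se ie) => //;
    apply: adj => //; by rewrite eq_sym.
have d4 : forall v, (if v \in nonisol e then 4 else 0) <= deg e v.
  move=> v; case: (boolP (v \in nonisol e)) => vn //=.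
  have := d3 v vn; move: (nc3 v); rewrite vn /= => h h'.
  by rewrite ltn_neqAle eq_sym h h'.
have hM : #|nonisol e| * 4 <= M e.
  rewrite -sum_nat_const big_mkcond /M; exact: leq_sum.
have : 0 < #|nonisol e| by apply/card_gt0P; exists v0; apply/nonisolP; exists w0.
have [h|h] := edge_bound (n := #|nonisol e|) (conj se ie) kf (leqnn _); lia.
Qed.

End Aux.

Lemma I3 (a b c d : 'I_3) : a != b -> a != c -> b != c -> b != d -> c != d -> a = d.
Proof. by move: a b c d; do 4! case=> [[|[|[|//]]] ?]; move=> *; apply/val_inj. Qed.

Lemma pig (a a' b d : 'I_3) :
  a != a' -> a != b -> a != d -> b != d -> a' != b -> a' != d -> False.
Proof. by move: a a' b d; do 4! case=> [[|[|[|//]]] ?]. Qed.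

Lemma chain_same (T : finType) (e : rel T) (c : T -> 'I_3) (X : {set T}) :
  proper_coloring e c -> connected_by_chain_of_diamonds e X ->
  exists k, forall t, t \in X -> c t = k.
Proof.
move=> pc [n [u [v [w [hom cov]]]]]; exists (c (u 0)) => t /cov[i iln <-].
elim: i iln => [//|i IH] iln; rewrite -IH ?(ltnW iln) //.
have [e1 e2 e3 e4 e5] := hom i.+1 (iln).
symmetry; apply: (I3 (b := c (v i.+1)) (c := c (w i.+1))); exact: pc.
Qed.

Lemma img_le2 (T : finType) (c : T -> 'I_3) p q r :
  (c p == c q) || (c p == c r) || (c q == c r) -> #|c @: [set p; q; r]| <= 2.
Proof.
have key : forall a b (A : {set T}), A \subset [set a; b] -> #|c @: A| <= 2.
  move=> a b A sub; apply: (leq_trans (leq_imset_card c A)).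
  by apply: (leq_trans (subset_leq_card sub)); rewrite cards2; case: (_ != _).
have key2 : forall a b (A : {set T}), c @: A \subset [set c a; c b] -> #|c @: A| <= 2.
  move=> a b A sub; apply: (leq_trans (subset_leq_card sub)).
  by rewrite cards2; case: (_ != _).
case/orP => [/orP[]|] /eqP E.
- apply: (key2 q r); apply/subsetP => k /imsetP[t tin ->]; move: tin;
  rewrite !inE -?orbA => /or3P[]/eqP->; by rewrite ?E eqxx ?orbT.
- apply: (key2 q r); apply/subsetP => k /imsetP[t tin ->]; move: tin;
  rewrite !inE -?orbA => /or3P[]/eqP->; by rewrite ?E eqxx ?orbT.
- apply: (key2 p r); apply/subsetP => k /imsetP[t tin ->]; move: tin;
  rewrite !inE -?orbA => /or3P[]/eqP->; by rewrite ?E eqxx ?orbT.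
Qed.

Lemma card3 (T : finType) (p q r : T) : p != q -> p != r -> q != r -> #|[set p; q; r]| = 3.
Proof.
move=> pq pr qr.
have -> : [set p; q; r] = p |: (q |: [set r]).
  by apply/setP => t; rewrite !inE orbA.
by rewrite !cardsU1 cards1 !inE negb_or pq pr qr.
Qed.

Theorem mainTheorem9 (T : finType) (e : rel T) (x x' y z : T) :
  simple_graph e -> K4_minor_free e -> e x x' ->
  y != z -> y \notin [set x; x'] -> z \notin [set x; x'] ->
  feasible e [set x; y; z] \/ feasible e [set x'; y; z].
Proof.
move=> [se ie] kf exx' yz yn zn.
have [c pc] := col3 (n := #|nonisol e|) (conj se ie) kf (leqnn _).
have cxx' : c x != c x' := pc x x' exx'.
move: yn zn; rewrite !inE !negb_or => /andP[yx yx'] /andP[zx zx'].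
have c1 : #|[set x; y; z]| = 3 by apply: card3; rewrite // eq_sym.
have c2 : #|[set x'; y; z]| = 3 by apply: card3; rewrite // eq_sym.
have chE : forall p, connected_by_chain_of_diamonds e [set p; y; z] ->
    c p = c y /\ c y = c z.
  move=> p /(chain_same pc)[k Hk].
  by rewrite !Hk // !inE eqxx ?orbT.
case: (boolP ((c x == c y) || (c x == c z) || (c y == c z))) => h1.
  case: (classic (connected_by_chain_of_diamonds e [set x; y; z])) => ch1.
    have [E1 E2] := chE x ch1.
    right; split => //.
      move=> /chE [E3 _]; by rewrite E1 E3 eqxx in cxx'.
    by exists c; split => //; apply: img_le2; rewrite E2 eqxx orbT.
  by left; split => //; exists c; split => //; apply: img_le2.
move: h1; rewrite !negb_or => /andP[/andP[xy xz] yz'].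
right; split => //.
  by move=> /chE [_ E]; rewrite E eqxx in yz'.
exists c; split => //; apply: img_le2.
case: (boolP ((c x' == c y) || (c x' == c z) || (c y == c z))) => // h2.
move: h2; rewrite !negb_or => /andP[/andP[x'y x'z] _].
by exfalso; apply: (pig cxx' xy xz yz' x'y x'z).
Qed.
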